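(* Let $G$ be a torsion-free nilpotent group with Hirsch length $h$, and let $x_1,\ldots,x_h$ be a generating set of $G$ such that every $g\in G$ can be written uniquely as $g=x_1^{\ell_1}\cdots x_h^{\ell_h}$ with $\ell_i\in\mathbb{Z}$, and $[x_i,x_j]\in\langle x_{j+1},\ldots,x_h\rangle$ whenever $1\le i<j\le h$. Suppose further that for some positive integers $q_1,\ldots,q_h$ the set $H=\{x_1^{q_1\ell_1}\cdots x_h^{q_h\ell_h}:\ell_i\in\mathbb{Z}\}$ is a subgroup of $G$. Then the set $X=\{x_1^{k_1}\cdots x_h^{k_h}:0\le k_i<q_i\}$ contains exactly one element from each left coset $gH$ of $H$ in $G$.
   Context: $[x,y]=x^{-1}y^{-1}xy$. *)

(* Defs.v *)
From Stdlib Require Import ZArith Arith Lia List.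
Open Scope Z_scope.

Record Group := {
  carrier :> Type;
  gmul : carrier -> carrier -> carrier;
  gone : carrier;
  ginv : carrier -> carrier;
  gmulA : forall a b c, gmul a (gmul b c) = gmul (gmul a b) c;
  gmul1l : forall a, gmul gone a = a;
  gmul1r : forall a, gmul a gone = a;
  gmulVl : forall a, gmul (ginv a) a = gone;
  gmulVr : forall a, gmul a (ginv a) = gone
}.

Section GroupDefs.
Variable G : Group.

Definition npow (x : G) (n : nat) : G := Nat.iter n (fun y => gmul G y x) (gone G).

Definition zpow (x : G) (n : Z) : G :=
  match n with
  | Z0 => gone G
  | Zpos p => npow x (Pos.to_nat p)
  | Zneg p => npow (ginv G x) (Pos.to_nat p)
  end.

Definition comm (x y : G) : G :=
  gmul G (gmul G (gmul G (ginv G x) (ginv G y)) x) y.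

Definition is_subgroup (K : G -> Prop) : Prop :=
  K (gone G) /\ (forall a b, K a -> K b -> K (gmul G a b)) /\
  (forall a, K a -> K (ginv G a)).

Definition gen (S : G -> Prop) : G -> Prop :=
  fun g => forall K, is_subgroup K -> (forall s, S s -> K s) -> K g.

Fixpoint lcs (i : nat) : G -> Prop :=
  match i with
  | O => fun _ => True
  | S i' => gen (fun c => exists a b, lcs i' b /\ c = comm a b)
  end.

Definition nilpotent : Prop :=
  exists n, forall g, lcs n g -> g = gone G.

Definition torsion_free : Prop :=
  forall (g : G) (n : nat), (0 < n)%nat -> npow g n = gone G -> g = gone G.

(* A (finite) subnormal series G = N 0 >= N 1 >= ... >= N m = 1 with cyclic
   factors N i / N (i+1) generated by the image of t i; inf i records whether
   the factor is infinite cyclic. *)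
Definition cyclic_series (m : nat) (N : nat -> G -> Prop) (t : nat -> G)
    (inf : nat -> bool) : Prop :=
  (forall g, N O g) /\ (forall g, N m g -> g = gone G) /\
  forall i, (i < m)%nat ->
    is_subgroup (N i) /\ is_subgroup (N (S i)) /\
    (forall g, N (S i) g -> N i g) /\
    (forall g a, N (S i) g -> N i a ->
       N (S i) (gmul G (gmul G (ginv G a) g) a)) /\
    N i (t i) /\
    (forall g, N i g -> exists k, N (S i) (gmul G (zpow (t i) (- k)) g)) /\
    (inf i = true <-> forall k, k <> 0 -> ~ N (S i) (zpow (t i) k)).

(* Hirsch length: number of infinite cyclic factors in a polycyclic series
   (independent of the series). *)
Definition hirsch_length (h : nat) : Prop :=
  exists m N t inf, cyclic_series m N t inf /\
    h = fold_right (fun i acc => (if inf i then 1 else 0) + acc)%nat O (seq 0 m).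

Fixpoint word (x : nat -> G) (l : nat -> Z) (n : nat) : G :=
  match n with
  | O => gone G
  | S n' => gmul G (word x l n') (zpow (x n') (l n'))
  end.

End GroupDefs.

(* Main.v *)
Require Import Defs.
From Stdlib Require Import ZArith Arith Lia.
Open Scope Z_scope.

Arguments gmul {_}. Arguments gone {_}. Arguments ginv {_}.

Lemma mulKV (G : Group) (a b : G) : gmul (gmul a (ginv b)) b = a.
Proof. rewrite <- gmulA, gmulVl, gmul1r. reflexivity. Qed.
Lemma mulVK (G : Group) (a b : G) : gmul (gmul a b) (ginv b) = a.
Proof. rewrite <- gmulA, gmulVr, gmul1r. reflexivity. Qed.
Lemma ginv_uniq (G : Group) (a b : G) : gmul a b = gone -> ginv a = b.
Proof. intro E. rewrite <- (gmul1r _ (ginv a)), <- E, gmulA, gmulVl, gmul1l. reflexivity. Qed.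
Lemma ginv_inv (G : Group) (a : G) : ginv (ginv a) = a.
Proof. apply ginv_uniq. apply gmulVl. Qed.
Lemma ginv_mul (G : Group) (a b : G) : ginv (gmul a b) = gmul (ginv b) (ginv a).
Proof. apply ginv_uniq. rewrite gmulA, mulVK, gmulVr. reflexivity. Qed.
Lemma ginv_one (G : Group) : ginv (@gone G) = gone.
Proof. apply ginv_uniq. apply gmul1l. Qed.

Ltac gsimpl := repeat progress rewrite ?ginv_mul, ?ginv_inv, ?ginv_one, ?gmul1l, ?gmul1r, ?gmulA, ?mulKV, ?mulVK, ?gmulVl, ?gmulVr.

Lemma zpow_succ (G : Group) (y : G) n : zpow G y (Z.succ n) = gmul (zpow G y n) y.
Proof.
  destruct n as [|p|p].
  - reflexivity.
  - change (npow G y (Pos.to_nat (p + 1)) = gmul (npow G y (Pos.to_nat p)) y).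
    rewrite Pos.add_1_r, Pos2Nat.inj_succ. reflexivity.
  - destruct (Pos.eq_dec p 1) as [->|Hp].
    + simpl. unfold npow. simpl. rewrite gmul1l, gmulVl. reflexivity.
    + rewrite <- (Pos.succ_pred p Hp).
      assert (E : Z.succ (Z.neg (Pos.succ (Pos.pred p))) = Z.neg (Pos.pred p)) by lia.
      rewrite E. simpl. rewrite Pos2Nat.inj_succ. unfold npow. simpl.
      rewrite mulKV. reflexivity.
Qed.

Lemma zpow_pred (G : Group) (y : G) n : zpow G y (Z.pred n) = gmul (zpow G y n) (ginv y).
Proof.
  rewrite <- (Z.succ_pred n) at 2. rewrite zpow_succ. gsimpl. reflexivity.
Qed.

Lemma zpow_add (G : Group) (y : G) a b : zpow G y (a + b) = gmul (zpow G y a) (zpow G y b).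
Proof.
  induction b using Z.peano_ind.
  - rewrite Z.add_0_r. simpl. gsimpl. reflexivity.
  - rewrite Z.add_succ_r, !zpow_succ, IHb. gsimpl. reflexivity.
  - rewrite Z.add_pred_r, !zpow_pred, IHb. gsimpl. reflexivity.
Qed.

Lemma zpow0 (G : Group) (y : G) : zpow G y 0 = gone.
Proof. reflexivity. Qed.
Lemma zpow1 (G : Group) (y : G) : zpow G y 1 = y.
Proof. simpl. unfold npow. simpl. apply gmul1l. Qed.

Lemma zpow_opp (G : Group) (y : G) a : zpow G y (- a) = ginv (zpow G y a).
Proof.
  symmetry. apply ginv_uniq. rewrite <- zpow_add. rewrite Z.add_opp_diag_r. reflexivity.
Qed.

Lemma sub_zpow (G : Group) (K : G -> Prop) (y : G) n :
  is_subgroup G K -> K y -> K (zpow G y n).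
Proof.
  intros (H1 & Hm & Hi) Hy.
  assert (forall z k, K z -> K (npow G z k)).
  { intros z k Hz. induction k; simpl. exact H1. apply Hm; auto. }
  destruct n; simpl; auto.
Qed.

Definition conj (G : Group) (g w : G) : G := gmul (gmul (ginv g) w) g.

Lemma conj_mul (G : Group) (g a b : G) : conj G g (gmul a b) = gmul (conj G g a) (conj G g b).
Proof. unfold conj. gsimpl. reflexivity. Qed.
Lemma conj_inv (G : Group) (g a : G) : conj G g (ginv a) = ginv (conj G g a).
Proof. unfold conj. gsimpl. reflexivity. Qed.
Lemma conj_one (G : Group) (g : G) : conj G g gone = gone.
Proof. unfold conj. gsimpl. reflexivity. Qed.
Lemma conj_zpow (G : Group) (g a : G) n : conj G g (zpow G a n) = zpow G (conj G g a) n.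
Proof.
  assert (forall z k, conj G g (npow G z k) = npow G (conj G g z) k).
  { intros z k. induction k; simpl. apply conj_one. rewrite conj_mul, IHk. reflexivity. }
  destruct n; simpl. apply conj_one. apply H. rewrite H, conj_inv. reflexivity.
Qed.
Lemma conj_comp (G : Group) (a b w : G) : conj G (gmul a b) w = conj G b (conj G a w).
Proof. unfold conj. gsimpl. reflexivity. Qed.

Lemma norm_subgroup (G : Group) (K : G -> Prop) :
  is_subgroup G (fun g => forall w, K w -> K (conj G g w) /\ K (conj G (ginv g) w)).
Proof.
  split; [|split].
  - intros w Hw. unfold conj. gsimpl. auto.
  - intros a b Ha Hb w Hw. rewrite conj_comp, ginv_mul, conj_comp.
    split. apply Hb, Ha, Hw. apply Ha, Hb, Hw.
  - intros a Ha w Hw. rewrite ginv_inv. split; apply Ha; auto.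
Qed.

Fixpoint rw (G : Group) (x : nat -> G) (l : nat -> Z) (a k : nat) : G :=
  match k with
  | O => gone
  | S k => gmul (zpow G (x a) (l a)) (rw G x l (S a) k)
  end.

Lemma rw_ext G x l l' a k : (forall i, (a <= i < a + k)%nat -> l i = l' i) ->
  rw G x l a k = rw G x l' a k.
Proof.
  revert a; induction k; intros a E; simpl. reflexivity.
  rewrite E by lia. f_equal. apply IHk. intros; apply E; lia.
Qed.

Lemma rw_snoc G x l a k : rw G x l a (S k) = gmul (rw G x l a k) (zpow G (x (a + k)%nat) (l (a+k)%nat)).
Proof.
  revert a; induction k; intros a; simpl.
  - rewrite Nat.add_0_r. gsimpl. reflexivity.
  - simpl in IHk. rewrite IHk. rewrite <- Nat.add_succ_comm. gsimpl. reflexivity.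
Qed.

Lemma word_rw G x l n : word G x l n = rw G x l 0 n.
Proof.
  induction n. reflexivity.
  rewrite rw_snoc. simpl. rewrite IHn. reflexivity.
Qed.

Lemma rw_app G x l a k1 k2 : rw G x l a (k1 + k2) = gmul (rw G x l a k1) (rw G x l (a + k1) k2).
Proof.
  revert a; induction k1; intros a; simpl.
  - rewrite Nat.add_0_r. gsimpl. reflexivity.
  - rewrite IHk1, <- Nat.add_succ_comm. gsimpl. reflexivity.
Qed.

Lemma rw_zero G x l a k : (forall i, (a <= i < a + k)%nat -> l i = 0) -> rw G x l a k = gone.
Proof.
  revert a; induction k; intros a E; simpl. reflexivity.
  rewrite E by lia. rewrite IHk. simpl. gsimpl. reflexivity. intros; apply E; lia.
Qed.

Lemma rw_step G x l h m : (m < h)%nat ->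
  rw G x l m (h - m) = gmul (zpow G (x m) (l m)) (rw G x l (S m) (h - S m)).
Proof. intros. replace (h - m)%nat with (S (h - S m)) by lia. reflexivity. Qed.

Definition W (G : Group) x h m (g : G) := exists l, g = rw G x l m (h - m).

Lemma W_cons G x h m g : (m < h)%nat ->
  (W G x h m g <-> exists a w, W G x h (S m) w /\ g = gmul (zpow G (x m) a) w).
Proof.
  intros Hm. split.
  - intros [l ->]. exists (l m), (rw G x l (S m) (h - S m)). split. exists l; reflexivity.
    apply rw_step; auto.
  - intros (a & w & [l ->] & ->). exists (fun i => if Nat.eqb i m then a else l i).
    rewrite (rw_step _ _ _ h m Hm). rewrite Nat.eqb_refl. f_equal. apply rw_ext.
    intros i Hi. destruct (Nat.eqb_spec i m); [lia|reflexivity].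
Qed.

Lemma W_one G x h m : W G x h m gone.
Proof. exists (fun _ => 0). symmetry. apply rw_zero. auto. Qed.

Lemma W_mono G x h m g : (m < h)%nat -> W G x h (S m) g -> W G x h m g.
Proof. intros Hm Hg. apply W_cons; auto. exists 0, g. split; auto. simpl. gsimpl. reflexivity. Qed.

Lemma W_mono' G x h m k g : (m <= k)%nat -> (k <= h)%nat -> W G x h k g -> W G x h m g.
Proof.
  intros H1 H2. induction H1; auto. intros Hg. apply IHle. lia. apply W_mono; auto.
Qed.

Lemma W_x G x h m k : (m <= k < h)%nat -> W G x h m (x k).
Proof.
  intros Hk. apply W_mono' with k; try lia. apply W_cons. lia.
  exists 1, gone. split. apply W_one. rewrite zpow1. gsimpl. reflexivity.
Qed.

Lemma W_embed G x h m d w : (m < h)%nat -> W G x h (S m) w ->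
  exists L, gmul (zpow G (x m) d) w = rw G x L 0 h /\ L m = d /\ forall i, (i < m)%nat -> L i = 0.
Proof.
  intros Hm [l ->].
  exists (fun i => if Nat.ltb i m then 0 else if Nat.eqb i m then d else l i).
  split; [|split].
  - replace h with (m + (h - m))%nat at 2 by lia. rewrite rw_app, (rw_zero G x _ 0 m).
    2:{ intros i Hi. destruct (Nat.ltb_spec i m); lia. }
    simpl. rewrite (rw_step _ _ _ h m Hm). rewrite Nat.ltb_irrefl, Nat.eqb_refl. gsimpl. f_equal.
    apply rw_ext. intros i Hi. destruct (Nat.ltb_spec i m); [lia|]. destruct (Nat.eqb_spec i m); [lia|reflexivity].
  - rewrite Nat.ltb_irrefl, Nat.eqb_refl. reflexivity.
  - intros i Hi. destruct (Nat.ltb_spec i m); lia.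
Qed.

Definition Nm (G : Group) x h m :=
  is_subgroup G (W G x h m) /\
  forall i, (i < m)%nat -> forall w, W G x h m w ->
     W G x h m (conj G (x i) w) /\ W G x h m (conj G (ginv (x i)) w).

Lemma Nm_all G h x
  (Hcomm : forall i j, (i < j)%nat -> (j < h)%nat ->
             gen G (fun y => exists k, (j < k)%nat /\ (k < h)%nat /\ y = x k)
                 (comm G (x i) (x j))) :
  forall m, (m <= h)%nat -> Nm G x h m.
Proof.
  assert (forall d m, (m + d = h)%nat -> Nm G x h m).
  2:{ intros m Hm. apply (H (h - m)%nat). lia. }
  induction d; intros m Hmd.
  - rewrite Nat.add_0_r in Hmd. subst m.
    assert (E : forall g, W G x h h g -> g = gone).
    { intros g [l ->]. rewrite Nat.sub_diag. reflexivity. }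
    split; [split; [|split]|].
    + apply W_one.
    + intros a b Ha Hb. rewrite (E a Ha), (E b Hb). gsimpl. apply W_one.
    + intros a Ha. rewrite (E a Ha). gsimpl. apply W_one.
    + intros i Hi w Hw. rewrite (E w Hw), !conj_one. split; apply W_one.
  - assert (Hm : (m < h)%nat) by lia.
    destruct (IHd (S m)) as [[T1 [Tm Ti]] Tn]. lia.
    set (T := W G x h (S m)) in *.
    assert (Hxz : forall n w, T w -> T (conj G (zpow G (x m) n) w) /\ T (conj G (ginv (zpow G (x m) n)) w)).
    { intros n. apply (sub_zpow G _ (x m) n (norm_subgroup G T)). intros w Hw. apply Tn; auto. }
    assert (Hsub : is_subgroup G (W G x h m)).
    { split; [|split].
      - apply W_one.
      - intros g1 g2 H1 H2. apply W_cons in H1; auto. apply W_cons in H2; auto.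
        destruct H1 as (a & w1 & Hw1 & ->). destruct H2 as (b & w2 & Hw2 & ->).
        apply W_cons; auto. exists (a + b), (gmul (conj G (zpow G (x m) b) w1) w2).
        split. apply Tm; auto. apply Hxz; auto.
        rewrite zpow_add. unfold conj. gsimpl. reflexivity.
      - intros g H1. apply W_cons in H1; auto. destruct H1 as (a & w & Hw & ->).
        apply W_cons; auto. exists (- a), (conj G (zpow G (x m) (- a)) (ginv w)).
        split. apply Hxz; auto. rewrite zpow_opp. unfold conj. gsimpl. reflexivity. }
    split; auto.
    intros i Hi.
    assert (Hi' : (i < S m)%nat) by lia.
    assert (Hc : T (comm G (x i) (x m))).
    { apply (Hcomm i m Hi Hm T). split; auto. intros k (k' & H1 & H2 & ->). apply W_x. lia. }
    assert (E1 : conj G (x i) (x m) = gmul (x m) (ginv (comm G (x i) (x m)))).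
    { unfold conj, comm. gsimpl. reflexivity. }
    assert (E2 : conj G (ginv (x i)) (x m) = gmul (x m) (conj G (ginv (x i)) (comm G (x i) (x m)))).
    { unfold conj, comm. gsimpl. reflexivity. }
    assert (G1 : W G x h m (conj G (x i) (x m))).
    { rewrite E1. apply W_cons; auto. exists 1, (ginv (comm G (x i) (x m))). split. apply Ti; auto.
      rewrite zpow1. reflexivity. }
    assert (G2 : W G x h m (conj G (ginv (x i)) (x m))).
    { rewrite E2. apply W_cons; auto. exists 1, (conj G (ginv (x i)) (comm G (x i) (x m))). split.
      apply Tn; auto. rewrite zpow1. reflexivity. }
    intros w Hw. apply W_cons in Hw; auto. destruct Hw as (a & w' & Hw' & ->).
    destruct Hsub as (S1 & Sm & Si).
    rewrite !conj_mul, !conj_zpow. split; apply Sm.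
    + apply sub_zpow; auto. split; auto.
    + apply W_mono; auto. apply Tn; auto.
    + apply sub_zpow; auto. split; auto.
    + apply W_mono; auto. apply Tn; auto.
Qed.

Lemma Nm_zpow G x h m : (m < h)%nat -> Nm G x h (S m) ->
  forall n w, W G x h (S m) w -> W G x h (S m) (conj G (zpow G (x m) n) w) /\
                                 W G x h (S m) (conj G (ginv (zpow G (x m) n)) w).
Proof.
  intros Hm [_ Tn] n. apply (sub_zpow G _ (x m) n (norm_subgroup G _)).
  intros w Hw. apply Tn; auto.
Qed.

Definition Xm (G : Group) x h (q : nat -> Z) m (c : G) :=
  exists k, (forall i, (m <= i < h)%nat -> 0 <= k i < q i) /\ c = rw G x k m (h - m).
Definition Hp (G : Group) x h (q : nat -> Z) (g : G) :=
  exists l : nat -> Z, g = word G x (fun i => q i * l i) h.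

Lemma uniq_all G h x q
  (Hcomm : forall i j, (i < j)%nat -> (j < h)%nat ->
             gen G (fun y => exists k, (j < k)%nat /\ (k < h)%nat /\ y = x k)
                 (comm G (x i) (x j)))
  (Huniq : forall l l' : nat -> Z, word G x l h = word G x l' h ->
             forall i, (i < h)%nat -> l i = l' i)
  (Hq : forall i, (i < h)%nat -> 0 < q i)
  (HH : is_subgroup G (Hp G x h q)) :
  forall m, (m <= h)%nat -> forall c c', Xm G x h q m c -> Xm G x h q m c' ->
    Hp G x h q (gmul (ginv c) c') -> c = c'.
Proof.
  assert (forall d m, (m + d = h)%nat -> forall c c', Xm G x h q m c -> Xm G x h q m c' ->
    Hp G x h q (gmul (ginv c) c') -> c = c').
  2:{ intros m Hm. apply (H (h - m)%nat). lia. }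
  induction d; intros m Hmd c c' [k [Hk ->]] [k' [Hk' ->]] HP.
  - rewrite Nat.add_0_r in Hmd. subst m. rewrite Nat.sub_diag. reflexivity.
  - assert (Hm : (m < h)%nat) by lia.
    assert (HN : Nm G x h (S m)) by (apply Nm_all; auto; lia).
    rewrite !(rw_step _ _ _ h m Hm) in *.
    set (d0 := rw G x k (S m) (h - S m)) in *.
    set (d1 := rw G x k' (S m) (h - S m)) in *.
    set (del := k' m - k m).
    assert (E : gmul (ginv (gmul (zpow G (x m) (k m)) d0)) (gmul (zpow G (x m) (k' m)) d1)
              = gmul (zpow G (x m) del) (gmul (conj G (zpow G (x m) del) (ginv d0)) d1)).
    { replace (k' m) with (k m + del) by (unfold del; lia). rewrite zpow_add.
      unfold conj. gsimpl. reflexivity. }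
    assert (Wd0 : W G x h (S m) d0) by (exists k; reflexivity).
    assert (Wd1 : W G x h (S m) d1) by (exists k'; reflexivity).
    destruct HN as [[T1 [Tm Ti]] Tn].
    assert (Win : W G x h (S m) (gmul (conj G (zpow G (x m) del) (ginv d0)) d1)).
    { apply Tm; auto. apply Nm_zpow; auto. split; [split; auto|auto]. }
    destruct (W_embed G x h m del _ Hm Win) as (L & EL & Lm & _).
    pose proof HP as HP0. rewrite E, EL in HP. destruct HP as [l Hl]. rewrite word_rw in Hl.
    assert (Em : L m = q m * l m).
    { apply (Huniq L (fun i => q i * l i)); auto. rewrite !word_rw. exact Hl. }
    assert (del = 0).
    { specialize (Hk m ltac:(lia)). specialize (Hk' m ltac:(lia)). specialize (Hq m Hm).
      rewrite Lm in Em. unfold del in *.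
      destruct (Z.lt_trichotomy (l m) 0) as [Hl0|[Hl0|Hl0]]; [nia| |nia]. rewrite Hl0 in Em. lia. }
    assert (Ekm : k' m = k m) by (unfold del in *; lia).
    rewrite Ekm. f_equal.
    apply (IHd (S m) ltac:(lia)).
    + exists k. split; auto. intros i Hi; apply Hk; lia.
    + exists k'. split; auto. intros i Hi; apply Hk'; lia.
    + rewrite Ekm, ginv_mul, !gmulA, mulKV in HP0. exact HP0.
Qed.

Lemma Hp_pow G h x q m t : (m < h)%nat ->
  Hp G x h q (zpow G (x m) (q m * t)).
Proof.
  intros Hm. exists (fun i => if Nat.eqb i m then t else 0). rewrite word_rw.
  replace h with (m + (h - m))%nat by lia. rewrite rw_app, (rw_zero G x _ 0 m).
  2:{ intros i Hi. destruct (Nat.eqb_spec i m); [lia|ring]. }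
  simpl. rewrite (rw_step _ _ _ h m Hm), Nat.eqb_refl, (rw_zero G x _ (S m)).
  2:{ intros i Hi. destruct (Nat.eqb_spec i m); [lia|ring]. }
  gsimpl. reflexivity.
Qed.

Lemma exist_all G h x q
  (Hcomm : forall i j, (i < j)%nat -> (j < h)%nat ->
             gen G (fun y => exists k, (j < k)%nat /\ (k < h)%nat /\ y = x k)
                 (comm G (x i) (x j)))
  (Hq : forall i, (i < h)%nat -> 0 < q i)
  (HH : is_subgroup G (Hp G x h q)) :
  forall m, (m <= h)%nat -> forall w, W G x h m w ->
    exists c, Xm G x h q m c /\ Hp G x h q (gmul (ginv c) w).
Proof.
  assert (forall d m, (m + d = h)%nat -> forall w, W G x h m w ->
    exists c, Xm G x h q m c /\ Hp G x h q (gmul (ginv c) w)).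
  2:{ intros m Hm. apply (H (h - m)%nat). lia. }
  destruct HH as (P1 & Pm & Pi).
  induction d; intros m Hmd w Hw.
  - rewrite Nat.add_0_r in Hmd. subst m. destruct Hw as [l ->].
    exists gone. split.
    + exists (fun _ => 0). split. intros; lia. rewrite Nat.sub_diag. reflexivity.
    + rewrite Nat.sub_diag. simpl. gsimpl. exact P1.
  - assert (Hm : (m < h)%nat) by lia.
    assert (HN : Nm G x h (S m)) by (apply Nm_all; auto; lia).
    apply W_cons in Hw; auto. destruct Hw as (a & w' & Hw' & ->).
    assert (Hqm : 0 < q m) by auto.
    set (t := a / q m). set (k0 := a mod q m).
    assert (Ea : a = k0 + q m * t) by (unfold t, k0; rewrite Z.add_comm; apply Z.div_mod; lia).
    set (y := conj G (ginv (zpow G (x m) (q m * t))) w').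
    assert (Wy : W G x h (S m) y) by (apply (Nm_zpow G x h m Hm HN); auto).
    destruct (IHd (S m) ltac:(lia) y Wy) as (c'' & [K [HK ->]] & Hc).
    exists (gmul (zpow G (x m) k0) (rw G x K (S m) (h - S m))). split.
    + exists (fun i => if Nat.eqb i m then k0 else K i). split.
      * intros i Hi. destruct (Nat.eqb_spec i m).
        -- subst i. apply Z.mod_pos_bound. lia.
        -- apply HK. lia.
      * rewrite (rw_step _ _ _ h m Hm), Nat.eqb_refl. f_equal. apply rw_ext.
        intros i Hi. destruct (Nat.eqb_spec i m); [lia|reflexivity].
    + assert (E : gmul (ginv (gmul (zpow G (x m) k0) (rw G x K (S m) (h - S m))))
                    (gmul (zpow G (x m) a) w')
                = gmul (gmul (ginv (rw G x K (S m) (h - S m))) y) (zpow G (x m) (q m * t))).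
      { rewrite Ea, zpow_add. unfold y, conj. gsimpl. reflexivity. }
      rewrite E. apply Pm; auto. apply Hp_pow; auto.
Qed.

Arguments gmul : clear implicits. Arguments gone : clear implicits. Arguments ginv : clear implicits.

(* Indices are shifted: x_1..x_h of the paper are x 0 .. x (h-1). *)
Theorem lemma5p5 (G : Group) (h : nat) (x : nat -> G) (q : nat -> Z)
  (Htf : torsion_free G) (Hnil : nilpotent G) (Hh : hirsch_length G h)
  (Hgen : forall g, gen G (fun y => exists i, (i < h)%nat /\ y = x i) g)
  (Hex : forall g : G, exists l : nat -> Z, g = word G x l h)
  (Huniq : forall l l' : nat -> Z, word G x l h = word G x l' h ->
             forall i, (i < h)%nat -> l i = l' i)
  (Hcomm : forall i j, (i < j)%nat -> (j < h)%nat ->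
             gen G (fun y => exists k, (j < k)%nat /\ (k < h)%nat /\ y = x k)
                 (comm G (x i) (x j)))
  (Hq : forall i, (i < h)%nat -> 0 < q i)
  (HH : is_subgroup G (fun g => exists l : nat -> Z,
                         g = word G x (fun i => q i * l i) h)) :
  forall g : G, exists c : G,
    ((exists k : nat -> Z, (forall i, (i < h)%nat -> 0 <= k i < q i) /\
        c = word G x k h) /\
     (exists l : nat -> Z, gmul G (ginv G g) c = word G x (fun i => q i * l i) h)) /\
    (forall c' : G,
       (exists k : nat -> Z, (forall i, (i < h)%nat -> 0 <= k i < q i) /\
          c' = word G x k h) ->
       (exists l : nat -> Z, gmul G (ginv G g) c' = word G x (fun i => q i * l i) h) ->
       c' = c).
Proof.
  intros g.
  change (is_subgroup G (Hp G x h q)) in HH.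
  assert (Wg : W G x h 0 g).
  { destruct (Hex g) as [l ->]. exists l. rewrite word_rw, Nat.sub_0_r. reflexivity. }
  destruct (exist_all G h x q Hcomm Hq HH 0 ltac:(lia) g Wg) as (c & [k [Hk Ec]] & Hc).
  pose proof HH as (P1 & Pm & Pi).
  exists c. split; [split|].
  - exists k. split. intros i Hi; apply Hk; lia. rewrite Ec, word_rw, Nat.sub_0_r. reflexivity.
  - apply Pi in Hc. rewrite ginv_mul, ginv_inv in Hc. exact Hc.
  - intros c' [k' [Hk' Ec']] Hc'.
    symmetry. apply (uniq_all G h x q Hcomm Huniq Hq HH 0 ltac:(lia)).
    + exists k. split; auto.
    + exists k'. split. intros i Hi; apply Hk'; lia. rewrite Ec', word_rw, Nat.sub_0_r. reflexivity.
    + assert (E : gmul G (ginv G c) c' = gmul G (ginv G (gmul G (ginv G g) c)) (gmul G (ginv G g) c')).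
      { gsimpl. reflexivity. }
      rewrite E. apply Pm; auto. apply Pi in Hc. rewrite ginv_mul, ginv_inv in Hc. apply Pi. exact Hc.
Qed.
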